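(* Let $B = M \cup \{\omega_1,\ldots,\omega_p\}$ with $p\ge 1$ and $\omega_1,\ldots,\omega_p \in P_2\setminus M$, where gates computing functions of $M$ have weight $0$ and gates computing $\omega_1,\ldots,\omega_p$ have weight $1$. Then there exists a constant $c(B)$ (depending only on $B$) such that for every finite system $F=\{f_1(x_1,\ldots,x_n),\ldots,f_m(x_1,\ldots,x_n)\}$ of Boolean functions $$\left\lceil \log_2 (d(F)+1)\right\rceil - c(B) \;\le\; I_B(F) \;\le\; \left\lceil \log_2 (d(F)+1)\right\rceil .$$
   Context: $P_2$ denotes the set of all Boolean functions and $M\subset P_2$ the set of all monotone Boolean functions (including the constants). Tuples in $E_2^n=\{0,1\}^n$ are compared componentwise: $\tilde\alpha\le\tilde\beta$ iff $\alpha_j\le\beta_j$ for all $j$. An increasing chain is a sequence of pairwise distinct tuples $\tilde\alpha_1,\ldots,\tilde\alpha_r\in E_2^n$ with $\tilde\alpha_i\le\tilde\alpha_{i+1}$ for $i=1,\ldots,r-1$. For a Boolean function $f$ of $x_1,\ldots,x_n$, an ordered pair $(\tilde\alpha,\tilde\beta)$ of tuples with $\tilde\alpha\le\tilde\beta$ and $f(\tilde\alpha)>f(\tilde\beta)$ is a jump of $f$; for a system $F$ of functions of $x_1,\ldots,x_n$, a pair is a jump of $F$ if it is a jump of some $f\in F$. For a chain $C=(\tilde\alpha_1,\ldots,\tilde\alpha_r)$, the decrease $d_C(F)$ is the number of indices $i$ such that $(\tilde\alpha_i,\tilde\alpha_{i+1})$ is a jump of $F$, and the decrease $d(F)$ is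 the maximum of $d_C(F)$ over all chains $C$ (for a single function $f$, $d(f)=d(\{f\})$). A circuit over $B$ is a Boolean circuit (directed acyclic graph of gates with inputs $x_1,\ldots,x_n$) each of whose gates computes a function of $B$; it realizes $F$ if each $f_i$ is computed at some gate or input. Its weight is the number of gates computing functions among $\omega_1,\ldots,\omega_p$. The inversion complexity $I_B(F)$ is the minimum weight of a circuit over $B$ realizing $F$. *)

(* Defs.v *)
From mathcomp Require Import all_boot.
Set Implicit Arguments. Unset Strict Implicit. Unset Printing Implicit Defensive.

Definition bvec (n : nat) := {ffun 'I_n -> bool}.
Definition boolfun (n : nat) := {ffun bvec n -> bool}.

Definition ble n (a b : bvec n) : bool := [forall i, a i ==> b i].

Definition monotone n (f : boolfun n) : Prop :=
  forall a b : bvec n, ble a b -> f a <= f b.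

Definition bfun := {k : nat & boolfun k}.

Definition is_jump n (f : boolfun n) (a b : bvec n) : bool :=
  ble a b && (f a && ~~ f b).
Definition is_jumpF n (F : seq (boolfun n)) (a b : bvec n) : bool :=
  has (fun f => is_jump f a b) F.
Definition is_chain n (s : seq (bvec n)) : bool := uniq s && sorted (@ble n) s.
Definition dC n (F : seq (boolfun n)) (s : seq (bvec n)) : nat :=
  count (fun ab => is_jumpF F ab.1 ab.2) (zip s (behead s)).
Definition is_decrease n (F : seq (boolfun n)) (d : nat) : Prop :=
  (exists2 s, is_chain s & dC F s = d) /\
  (forall s, is_chain s -> dC F s <= d).

(* A gate: a function of some arity k, and for each argument position a node
   index; node i < n is the input x_(i+1), node n + j is the j-th gate. *)
Record gate := Gate {
  g_ar : nat;
  g_fun : boolfun g_ar;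
  g_in : {ffun 'I_g_ar -> nat} }.

Definition circuit := seq gate.

(* every gate only reads inputs or earlier gates (acyclicity) *)
Fixpoint wf_from (m : nat) (C : circuit) : bool :=
  if C is g :: C' then [forall i, g_in g i < m] && wf_from m.+1 C' else true.
Definition wf_circuit (n : nat) (C : circuit) : bool := wf_from n C.

Definition eval_gate (vals : seq bool) (g : gate) : bool :=
  g_fun g [ffun i => nth false vals (g_in g i)].
Definition eval n (C : circuit) (x : bvec n) : seq bool :=
  foldl (fun vals g => rcons vals (eval_gate vals g)) [seq x i | i <- enum 'I_n] C.

Definition in_omegas (om : seq bfun) (g : gate) : bool :=
  Tagged boolfun (g_fun g) \in om.
Definition gate_over (om : seq bfun) (g : gate) : Prop :=
  monotone (g_fun g) \/ in_omegas om g.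
Definition circuit_over n (om : seq bfun) (C : circuit) : Prop :=
  wf_circuit n C /\ forall j, j < size C -> gate_over om (nth (@Gate 0 [ffun _ => false] [ffun _ => 0]) C j).

Definition weight (om : seq bfun) (C : circuit) : nat := count (in_omegas om) C.

Definition realizes n (C : circuit) (F : seq (boolfun n)) : Prop :=
  forall f, f \in F -> exists2 v, v < n + size C &
    forall x : bvec n, f x = nth false (eval C x) v.

(* ceil(log2 k) for k >= 1 *)
Definition ceil_log2 (k : nat) : nat := up_log 2 k.

(* Main.v *)
Require Import Defs.
From mathcomp Require Import all_boot.
From mathcomp Require Import zify.
Set Implicit Arguments. Unset Strict Implicit. Unset Printing Implicit Defensive.

Section Steps.
Variable T : Type.
Fixpoint steps (R : T -> T -> bool) (s : seq T) : nat :=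
  match s with
  | a :: s' => (if s' is b :: _ then R a b else false) + steps R s'
  | [::] => 0 end.

Lemma steps_zip R s : count (fun ab => R ab.1 ab.2) (zip s (behead s)) = steps R s.
Proof.
elim: s => // a s IH; case: s IH => //= b s IH.
by rewrite IH.
Qed.

Lemma steps_cons R a t : steps R t <= steps R (a :: t).
Proof. by rewrite /=; apply: leq_addl. Qed.

Lemma steps_mono_path (Q R R' : T -> T -> bool) s :
  sorted Q s -> (forall a b, Q a b -> R a b -> R' a b) -> steps R s <= steps R' s.
Proof.
move=> + H; elim: s => // a s IH; case: s IH => //= b s IH /andP[Qab Pb].
apply: leq_add; last exact: IH.
by case: (R a b) (H a b Qab) => // ->.
Qed.

Lemma steps2 R a b t : steps R (a :: b :: t) = R a b + steps R (b :: t).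
Proof. by []. Qed.

Lemma steps_split R (P : pred T) s :
  steps R s <= steps R (filter P s) + steps R (filter (predC P) s)
               + steps (fun a b => P a != P b) s.
Proof.
elim: s => // a s IH; case: s IH => [|b s] IH; first by case: (P a).
have E1 : steps R (a :: b :: s) = R a b + steps R (b :: s) by [].
have E2 : steps (fun a b => P a != P b) (a :: b :: s) =
   (P a != P b) + steps (fun a b => P a != P b) (b :: s) by [].
rewrite E1 E2.
have C1 := steps_cons R a (filter P (b :: s)).
have C2 := steps_cons R a (filter (predC P) (b :: s)).
have TT : (true != true) = false by [].
have TF : (true != false) = true by [].
have FT : (false != true) = true by [].
have FF : (false != false) = false by [].
case Pa: (P a); case Pb: (P b); rewrite ?TT ?TF ?FT ?FF.
- have -> : filter P (a :: b :: s) = a :: b :: filter P s by rewrite /= Pa Pb.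
  have -> : filter (predC P) (a :: b :: s) = filter (predC P) (b :: s) by rewrite /= Pa.
  move: IH; rewrite [filter P (b :: s)]/= Pb => IH.
  rewrite steps2; lia.
- have -> : filter P (a :: b :: s) = a :: filter P (b :: s) by rewrite [filter _ (a :: _)]/= Pa.
  have -> : filter (predC P) (a :: b :: s) = filter (predC P) (b :: s) by rewrite [filter _ (a :: _)]/= Pa.
  have : R a b <= 1 by case: (R a b).
  lia.
- have -> : filter (predC P) (a :: b :: s) = a :: filter (predC P) (b :: s) by rewrite [filter _ (a :: _)]/= Pa.
  have -> : filter P (a :: b :: s) = filter P (b :: s) by rewrite [filter _ (a :: _)]/= Pa.
  have : R a b <= 1 by case: (R a b).
  lia.
- have -> : filter (predC P) (a :: b :: s) = a :: b :: filter (predC P) s by rewrite /= Pa Pb.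
  have -> : filter P (a :: b :: s) = filter P (b :: s) by rewrite [filter _ (a :: _)]/= Pa.
  move: IH; rewrite [filter (predC P) (b :: s)]/= Pb /= => IH.
  rewrite ?steps2; lia.
Qed.

Lemma steps_pot (f : T -> nat) a s :
  path (fun a b => f a <= f b) a s ->
  steps (fun a b => f a < f b) (a :: s) + f a <= f (last a s).
Proof.
elim: s a => [|b s IH] a /=; first by rewrite addn0.
move=> /andP[hab hp]; have := IH b hp; rewrite /=.
case: (ltnP (f a) (f b)) => /= h; lia.
Qed.
End Steps.

Lemma steps_map (T U : Type) (f : U -> T) R (s : seq U) :
  steps R (map f s) = steps (fun x y : U => R (f x) (f y)) s.
Proof. by elim: s => // a s IH; case: s IH => //= b s ->. Qed.


Lemma steps_false (T : Type) (s : seq T) : steps (fun _ _ => false) s = 0.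
Proof. by elim: s => // a s /= ->; case: s. Qed.

Lemma sorted_map_cond (T U : Type) (Q : rel T) (Q' : rel U) (f : T -> U) (P : pred T) s :
  sorted Q s -> (forall a b, Q a b -> P a -> P b -> Q' (f a) (f b)) -> all P s ->
  sorted Q' (map f s).
Proof.
move=> + H; elim: s => // a s IH; case: s IH => //= b s IH /andP[Qab Ps] /and3P[Pa Pb Pr].
rewrite H //=; apply: IH => //; by rewrite /= Pb.
Qed.

Definition evalC (C : circuit) (v : seq bool) :=
  foldl (fun vals g => rcons vals (eval_gate vals g)) v C.
Definition lb (a b : seq bool) : bool :=
  (size a == size b) && all (fun i => nth false a i <= nth false b i) (iota 0 (size a)).
Definition dropv (a b : seq bool) : bool :=
  has (fun i => nth false a i && ~~ nth false b i) (iota 0 (size a)).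
Definition inp (g : gate) (a : seq bool) : bvec (g_ar g) := [ffun i => nth false a (g_in g i)].
Definition popc k (u : bvec k) := #|[set j | u j]|.
Definition Kom (om : seq bfun) := \max_(w <- om) tag w.

Lemma lbP a b : lb a b -> forall j, nth false a j <= nth false b j.
Proof.
case/andP=> /eqP Hs /allP H j; case: (ltnP j (size a)) => hj.
  by apply: H; rewrite mem_iota.
by rewrite !nth_default // -Hs.
Qed.

Lemma lbI a b : size a = size b -> (forall j, nth false a j <= nth false b j) -> lb a b.
Proof. by move=> Hs H; rewrite /lb Hs eqxx; apply/allP => j _; apply: H. Qed.

Lemma lb_size a b : lb a b -> size a = size b.
Proof. by case/andP => /eqP. Qed.

Lemma lb_trans : transitive lb.
Proof.
move=> b a c Hab Hbc; apply: lbI; first by rewrite (lb_size Hab) (lb_size Hbc).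
by move=> j; apply: leq_trans (lbP Hab j) (lbP Hbc j).
Qed.

Lemma lb_inp g a b : lb a b -> ble (inp g a) (inp g b).
Proof.
move=> H; rewrite /ble; apply/forallP => i; rewrite !ffunE.
by have := lbP H (g_in g i); case: (nth false a _); case: (nth false b _).
Qed.

Lemma lb_rcons a b (y y' : bool) : lb a b -> y <= y' -> lb (rcons a y) (rcons b y').
Proof.
move=> H Hy; apply: lbI; first by rewrite !size_rcons (lb_size H).
move=> j; rewrite !nth_rcons -(lb_size H).
case: ltngtP => // _; exact: lbP H j.
Qed.

Lemma lb_nodrop a b : lb a b -> ~~ dropv a b.
Proof.
move=> H; apply/hasPn => j _; have := lbP H j.
by case: (nth false a j); case: (nth false b j).
Qed.

Lemma ble_ffun k (u v : bvec k) : ble u v -> forall i, u i <= v i.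
Proof. by move=> /forallP H i; have := H i; case: (u i); case: (v i). Qed.

Lemma popc_lt k (u v : bvec k) : ble u v -> u != v -> popc u < popc v.
Proof.
move=> H Hne; apply: proper_card; rewrite properEneq; apply/andP; split.
  apply: contra Hne => /eqP E; apply/eqP/ffunP => i.
  by move: (congr1 (fun A : {set 'I_k} => i \in A) E); rewrite !inE => ->.
apply/subsetP => i; rewrite !inE => hi; have := ble_ffun H i; rewrite hi.
by case: (v i).
Qed.

Lemma popc_le k (u : bvec k) : popc u <= k.
Proof. by rewrite /popc; apply: leq_trans (max_card _) _; rewrite card_ord. Qed.

Lemma evalC_cons g C a : evalC (g :: C) a = evalC C (rcons a (eval_gate a g)).
Proof. by []. Qed.

Lemma size_evalC C a : size (evalC C a) = size a + size C.
Proof.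
elim: C a => [|g C IH] a; first by rewrite addn0.
by rewrite evalC_cons IH size_rcons /= addSnnS.
Qed.

Fixpoint allover (om : seq bfun) (C : circuit) : Prop :=
  if C is g :: C' then gate_over om g /\ allover om C' else True.

Lemma LB om (C : circuit) (s : seq (seq bool)) : allover om C -> sorted lb s ->
  steps (fun a b => dropv (evalC C a) (evalC C b)) s + Kom om <= Kom om * 2 ^ weight om C.
Proof.
elim: C s => [|g C IH] s HC Hs.
  rewrite /weight /= expn0 muln1.
  have : steps (fun a b => dropv (evalC [::] a) (evalC [::] b)) s <= steps (fun _ _ => false) s.
    apply: (steps_mono_path Hs) => a b Hab; rewrite /evalC /=.
    by move: (lb_nodrop Hab); case: (dropv a b).
  rewrite steps_false => H; apply: leq_trans (leq_add H (leqnn _)) _; by [].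
set ext := fun a => rcons a (eval_gate a g).
case: HC => HC0 HC'.
have -> : steps (fun a b => dropv (evalC (g :: C) a) (evalC (g :: C) b)) s =
          steps (fun a b => dropv (evalC C a) (evalC C b)) (map ext s) by rewrite steps_map.
have Hw : weight om (g :: C) = in_omegas om g + weight om C by [].
rewrite Hw.
case Hg: (in_omegas om g).
- set P := fun v : seq bool => last false v.
  have Hsplit := steps_split (fun a b => dropv (evalC C a) (evalC C b)) P (map ext s).
  have HP : forall a, P (ext a) = eval_gate a g by move=> a; rewrite /P /ext last_rcons.
  have Hf : forall c : bool, sorted lb (map ext (filter (fun a => eval_gate a g == c) s)).
    move=> c; apply: (@sorted_map_cond _ _ lb lb ext (fun a => eval_gate a g == c)).
    - exact: (sorted_filter lb_trans _ Hs).
    - by move=> a b Hab /eqP Ha /eqP Hb; apply: lb_rcons => //; rewrite Ha Hb.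
    - by apply/allP => a; rewrite mem_filter => /andP[].
  have E1 : filter P (map ext s) = map ext (filter (fun a => eval_gate a g == true) s).
    by rewrite filter_map; congr map; apply: eq_filter => a; rewrite -HP eqb_id.
  have E2 : filter (predC P) (map ext s) = map ext (filter (fun a => eval_gate a g == false) s).
    rewrite filter_map; congr map; apply: eq_filter => a; rewrite -HP.
    by rewrite /preim /=; case: (P (ext a)).
  have I1 := IH _ HC' (Hf true).
  have I2 := IH _ HC' (Hf false).
  rewrite E1 E2 in Hsplit.
  have Hch : steps (fun a b => P a != P b) (map ext s) <= g_ar g.
    rewrite steps_map.
    apply: (@leq_trans (steps (fun a b => popc (inp g a) < popc (inp g b)) s)).
      apply: (steps_mono_path Hs) => a b Hab; rewrite !HP => Hne.
      apply: popc_lt; first exact: lb_inp.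
      by apply: contra Hne => /eqP E; rewrite /eval_gate -/(inp g a) -/(inp g b) E.
    case: s Hs {Hsplit Hf E1 E2 I1 I2} => [|a s] Hs; first by [].
    have := @steps_pot _ (fun a => popc (inp g a)) a s.
    have Hp : path (fun a0 b : seq bool => popc (inp g a0) <= popc (inp g b)) a s.
      apply: sub_path Hs => x y Hxy.
      case: (eqVneq (inp g x) (inp g y)) => [->//|hne].
      by apply: ltnW; apply: popc_lt => //; apply: lb_inp.
    move/(_ Hp); have := popc_le (inp g (last a s)); lia.
  have HK : g_ar g <= Kom om.
    by have := leq_bigmax_seq (F := tag) (P := xpredT) _ Hg isT.
  rewrite expnS; lia.
- have Hm : monotone (g_fun g).
    by case: HC0 => //; rewrite /in_omegas -/(in_omegas om g) Hg.
  rewrite add0n; apply: IH => //.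
  apply: (@sorted_map_cond _ _ lb lb ext xpredT) => //; last by apply/allP.
  move=> a b Hab _ _; apply: lb_rcons => //; exact: Hm (lb_inp g Hab).
Qed.

Lemma allover_nth om (C : circuit) :
  (forall j, j < size C -> gate_over om (nth (@Gate 0 [ffun _ => false] [ffun _ => 0]) C j)) ->
  allover om C.
Proof.
elim: C => //= g C IH H; split; first exact: (H 0).
by apply: IH => j hj; apply: (H j.+1).
Qed.

Lemma nth_inpv n (x : bvec n) j (hj : j < n) :
  nth false [seq x i | i <- enum 'I_n] j = x (Ordinal hj).
Proof.
rewrite (nth_map (Ordinal hj)) ?size_enum_ord //; congr (x _).
by apply: val_inj; rewrite /= nth_enum_ord.
Qed.

Lemma size_inpv n (x : bvec n) : size [seq x i | i <- enum 'I_n] = n.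
Proof. by rewrite size_map size_enum_ord. Qed.

Lemma lb_inpv n (x y : bvec n) : ble x y ->
  lb [seq x i | i <- enum 'I_n] [seq y i | i <- enum 'I_n].
Proof.
move=> H; apply: lbI; first by rewrite !size_inpv.
move=> j; case: (ltnP j n) => hj.
  by rewrite !(nth_inpv _ hj); apply: ble_ffun.
by rewrite !nth_default ?size_inpv.
Qed.

Lemma lower_bound om n (F : seq (boolfun n)) d C :
  is_decrease F d -> circuit_over n om C -> realizes C F ->
  ceil_log2 d.+1 <= weight om C + Kom om.
Proof.
move=> [[s Hch Hds] _] [_ Hov] Hre.
have HA := allover_nth Hov.
case/andP: Hch => _ Hsort.
have H1 : d <= steps (fun a b => dropv (evalC C a) (evalC C b))
                   (map (fun x : bvec n => [seq x i | i <- enum 'I_n]) s).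
  rewrite -Hds /dC steps_zip steps_map.
  apply: (steps_mono_path Hsort) => a b Hab /hasP[f Hf /andP[_ /andP[fa fb]]].
  have [v Hv Hfv] := Hre f Hf.
  apply/hasP; exists v; first by rewrite mem_iota size_evalC size_inpv.
  by rewrite -[evalC C _]/(eval C a) -[evalC C [seq b i | i <- _]]/(eval C b) -!Hfv fa.
have H2 := LB (s := map (fun x : bvec n => [seq x i | i <- enum 'I_n]) s) HA
  (sorted_map_cond (P := xpredT) Hsort (fun a b h _ _ => lb_inpv h) (introT allP (fun _ _ => isT))).
rewrite /ceil_log2; apply: up_log_min => //.
have HK := ltn_expl (Kom om) (isT : 1 < 2).
have Hp : 0 < 2 ^ weight om C by rewrite expn_gt0.
rewrite expnD; nia.
Qed.

Lemma ble_refl n (x : bvec n) : ble x x.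
Proof. by apply/forallP => i; apply/implyP. Qed.

Lemma ble_trans n : transitive (@ble n).
Proof.
move=> y x z Hxy Hyz; apply/forallP => i.
by have := ble_ffun Hxy i; have := ble_ffun Hyz i; case: (x i); case: (y i); case: (z i).
Qed.

Lemma ble_anti n (x y : bvec n) : ble x y -> ble y x -> x = y.
Proof.
move=> H1 H2; apply/ffunP => i; have := ble_ffun H1 i; have := ble_ffun H2 i.
by case: (x i); case: (y i).
Qed.

Section DSec.
Variables (n : nat) (F : seq (boolfun n)).

Fixpoint Dt (t : nat) (x : bvec n) : nat :=
  if t is t'.+1 then \max_(y | ble x y && (y != x)) (is_jumpF F x y + Dt t' y) else 0.

Definition ht (x : bvec n) := #|[set i | ~~ x i]|.

Lemma ht_lt x y : ble x y -> y != x -> ht y < ht x.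
Proof.
move=> H Hne; apply: proper_card; rewrite properEneq; apply/andP; split.
  apply: contra Hne => /eqP E; apply/eqP/ffunP => i.
  move: (congr1 (fun A : {set 'I_n} => i \in A) E); rewrite !inE.
  by case: (x i); case: (y i).
apply/subsetP => i; rewrite !inE => hi; have := ble_ffun H i.
by case: (x i) hi; case: (y i).
Qed.

Lemma ht_le x : ht x <= n.
Proof. by rewrite /ht; apply: leq_trans (max_card _) _; rewrite card_ord. Qed.

Lemma Dt_stab t x : ht x <= t -> Dt t x = Dt t.+1 x.
Proof.
elim: t x => [|t IH] x hx.
  apply/eqP; rewrite eq_sym -leqn0 /=; apply/bigmax_leqP => y /andP[h1 h2].
  by have := ht_lt h1 h2; lia.
rewrite [LHS]/= [RHS]/=; apply: eq_bigr => y /andP[h1 h2].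
by rewrite IH //; have := ht_lt h1 h2; lia.
Qed.

Definition D' x := Dt n x.

Lemma D'_step x y : ble x y -> y != x -> is_jumpF F x y + D' y <= D' x.
Proof.
move=> h1 h2; rewrite /D' (Dt_stab (ht_le x)) /=.
by apply: (leq_bigmax_cond (P := fun y => ble x y && (y != x))); rewrite h1 h2.
Qed.

Lemma Dt_chain t x : exists s, is_chain (x :: s) /\ Dt t x <= dC F (x :: s).
Proof.
elim: t x => [|t IH] x; first by exists [::]; split => //; rewrite /is_chain /=.
case: (pickP (fun y => ble x y && (y != x))) => [y0 Py0|none]; last first.
  exists [::]; split; first by rewrite /is_chain /=.
  by rewrite /= big_pred0.
rewrite /= (bigmax_eq_arg y0 Py0).
set y := [arg max_(i > y0 | _) _].
have Py : ble x y && (y != x) by rewrite /y; case: arg_maxnP.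
case/andP: Py => h1 h2.
have [s [Hc Hd]] := IH y.
exists (y :: s); split.
  case/andP: Hc => Hu Hs; apply/andP; split; last by rewrite /= h1; exact: Hs.
  rewrite cons_uniq Hu andbT inE negb_or eq_sym h2 /=; apply/negP => xs.
  have := order_path_min (@ble_trans n) Hs; move/allP/(_ x xs) => hyx.
  by move: h2; rewrite (ble_anti h1 hyx) eqxx.
by rewrite /dC steps_zip steps2 -steps_zip; move: Hd; rewrite /dC; lia.
Qed.

Variable d : nat.
Hypothesis Hd : is_decrease F d.

Lemma D'_le x : D' x <= d.
Proof.
have [s [Hc H]] := Dt_chain n x; apply: leq_trans H _.
by case: Hd => _; apply.
Qed.

Definition Dv x := d - D' x.

Lemma Dv_le x : Dv x <= d.
Proof. exact: leq_subr. Qed.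

Lemma Dv_mono x y : ble x y -> Dv x <= Dv y.
Proof.
move=> h; case: (eqVneq y x) => [->//|hne].
have := D'_step h hne; have := D'_le x; rewrite /Dv; lia.
Qed.

Lemma Dv_jump f x y : f \in F -> ble x y -> f x -> ~~ f y -> Dv x < Dv y.
Proof.
move=> hf h fx fy.
have hne : y != x by apply: contra fy => /eqP ->.
have hj : is_jumpF F x y by apply/hasP; exists f => //; rewrite /is_jump h fx fy.
have := D'_step h hne; rewrite hj; have := D'_le x; rewrite /Dv; lia.
Qed.
End DSec.

Definition bit i m := odd (m %/ 2 ^ i).

Lemma div2S u j : u %/ 2 ^ j.+1 = u %/ 2 %/ 2 ^ j.
Proof. by rewrite expnS divnMA. Qed.

Lemma halfE u : u = odd u + (u %/ 2) * 2.
Proof. by rewrite divn2 muln2 odd_double_half. Qed.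

Lemma bitle K u v : u < 2 ^ K -> v < 2 ^ K ->
  (forall j, j < K -> bit j u <= bit j v) -> u <= v.
Proof.
elim: K u v => [|K IH] u v hu hv H; first by rewrite expn0 in hu; lia.
have h0 := H 0 isT; rewrite /bit expn0 !divn1 in h0.
have h1 : u %/ 2 <= v %/ 2.
  apply: IH.
  - by rewrite ltn_divLR // -expnSr.
  - by rewrite ltn_divLR // -expnSr.
  - by move=> j hj; have := H j.+1 hj; rewrite /bit !div2S.
rewrite (halfE u) (halfE v); lia.
Qed.

Lemma bit_step K i u v : i < K -> u <= v -> u < 2 ^ K -> v < 2 ^ K ->
  (forall j, i < j < K -> bit j v <= bit j u) -> bit i u <= bit i v.
Proof.
move=> hi huv hu hv H.
have Hq : forall w, w %/ 2 ^ i.+1 = w %/ 2 ^ i %/ 2 by move=> w; rewrite expnSr divnMA.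
have H1 : u %/ 2 ^ i.+1 <= v %/ 2 ^ i.+1 by apply: leq_div2r.
have HK : 2 ^ K = 2 ^ (K - i.+1) * 2 ^ i.+1 by rewrite -expnD subnK.
have H2 : v %/ 2 ^ i.+1 <= u %/ 2 ^ i.+1.
  apply: (@bitle (K - i.+1)).
  - by rewrite ltn_divLR ?expn_gt0 // -HK.
  - by rewrite ltn_divLR ?expn_gt0 // -HK.
  - move=> j hj; rewrite /bit -!divnMA -expnD; apply: H; lia.
have H3 : u %/ 2 ^ i <= v %/ 2 ^ i by apply: leq_div2r.
move: H1 H2 H3; rewrite !Hq /bit.
rewrite {3}(halfE (u %/ 2 ^ i)) {3}(halfE (v %/ 2 ^ i)); lia.
Qed.

Definition dgate := @Gate 0 [ffun _ => false] [ffun _ => 0].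

Lemma wf_nth (C : circuit) m :
  (forall p, p < size C -> [forall i, g_in (nth dgate C p) i < m + p]) -> wf_from m C.
Proof.
elim: C m => //= g C IH m H; apply/andP; split.
  by have := H 0 isT; rewrite addn0.
by apply: IH => p hp; have := H p.+1 hp; rewrite addnS addSn.
Qed.

Lemma evalC_rcons C g v : evalC (rcons C g) v = rcons (evalC C v) (eval_gate (evalC C v) g).
Proof. by rewrite /evalC foldl_rcons. Qed.

Lemma count_isneg j m :
  count (fun p => odd p && (3 <= p) && (p < j.+1.*2)) (iota 0 m) <= j.
Proof.
elim: j => [|j IH].
  rewrite (@eq_count _ _ pred0) ?count_pred0 // => p /=.
  by apply/negbTE; apply/negP => /andP[/andP[_ h3] h2]; move: h3 h2; rewrite /=; lia.
apply: leq_trans (@sub_count _ _ (predU (fun p => odd p && (3 <= p) && (p < j.+1.*2))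
                                        (pred1 (j.*2 + 3))) _ _) _.
  move=> p /= /andP[/andP[op h3] hp]; case: (ltnP p (j.+1).*2) => h.
    by rewrite op h3.
  have : (p = (j.+1).*2) \/ (p = j.*2 + 3) by move: hp h; rewrite !doubleS; lia.
  case=> E; last by rewrite E eqxx orbT.
  by move: op; rewrite E odd_double.
have := count_predUI (fun p => odd p && (3 <= p) && (p < j.+1.*2)) (pred1 (j.*2 + 3)) (iota 0 m).
have := count_uniq_mem (j.*2 + 3) (iota_uniq 0 m).
case: (_ \in _) => /= h1 h2; lia.
Qed.

Section Circ.
Variables (n : nat) (F : seq (boolfun n)) (d : nat).
Hypothesis Hd : is_decrease F d.
Variables (kw : nat) (wf : boolfun kw) (a b : bvec kw).
Hypotheses (hab : ble a b) (ha : wf a) (hb : ~~ wf b).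

Let k := up_log 2 d.+1.
Let K2 := (k.+1).*2.
Let N := K2 + size F.

Definition bitf i (x : bvec n) := bit i (Dv F d x).

Definition tgtf p (x : bvec n) : bool :=
  if p == 0 then false else if p == 1 then true
  else if p < K2 then (if odd p then ~~ bitf (k.-1 - (p - 2)./2) x else bitf (k.-1 - (p - 2)./2) x)
  else (nth [ffun _ => false] F (p - K2)) x.

Definition nodev j (x : bvec n) : bool :=
  if j < n then nth false [seq x i | i <- enum 'I_n] j else tgtf (j - n) x.

Lemma nodevR p x : nodev (n + p) x = tgtf p x.
Proof. by rewrite /nodev ltnNge leq_addr /= addKn. Qed.

Lemma nodevL j x (hj : j < n) : nodev j x = x (Ordinal hj).
Proof. by rewrite /nodev hj nth_inpv. Qed.

Definition pre p (x : bvec n) : bvec (n + p) := [ffun j : 'I_(n + p) => nodev j x].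

Definition monext p : boolfun (n + p) :=
  [ffun v => [exists x, ble (pre p x) v && tgtf p x]].

Definition MONg p := @Gate (n + p) (monext p) [ffun j : 'I_(n + p) => val j].
Definition NEGg p := @Gate kw wf [ffun j : 'I_kw => if a j == b j then (if a j then n.+1 else n) else (n + p).-1].
Definition isneg p := odd p && (3 <= p) && (p < K2).
Definition mkgate p := if isneg p then NEGg p else MONg p.
Definition Cc := mkseq mkgate N.

Lemma dlt x : Dv F d x < 2 ^ k.
Proof.
apply: leq_trans (up_logP _ (isT : 1 < 2)); rewrite ltnS; exact: Dv_le.
Qed.

Lemma tgtf_b r x : r < k -> tgtf (r.*2 + 2) x = bitf (k.-1 - r) x.
Proof.
move=> hr; rewrite /tgtf addn2 /= ifT; last by rewrite /K2 -!muln2; lia.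
have -> : r.*2.+2 - 2 = r.*2 by lia.
by rewrite odd_double /= doubleK.
Qed.

Lemma tgtf_c r x : r < k -> tgtf (r.*2 + 3) x = ~~ bitf (k.-1 - r) x.
Proof.
move=> hr; rewrite /tgtf addn3 /= ifT; last by rewrite /K2 -!muln2; lia.
by rewrite odd_double /= uphalf_double.
Qed.

Lemma tgtf_f q x : tgtf (K2 + q) x = (nth [ffun _ => false] F q) x.
Proof.
have h0 : (K2 + q == 0) = false by rewrite /K2; lia.
have h1 : (K2 + q == 1) = false by rewrite /K2; lia.
have h2 : (K2 + q < K2) = false by lia.
by rewrite /tgtf h0 h1 h2 addKn.
Qed.

Lemma le_bool (b1 b2 : bool) : (b1 -> b2) -> b1 <= b2.
Proof. by case: b1 b2 => [] [] // ->. Qed.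

Lemma nodevL' (i : 'I_n) x : nodev i x = x i.
Proof. by rewrite (nodevL x (ltn_ord i)); congr (x _); apply: val_inj. Qed.

Lemma pre_ble p x x' : ble (pre p x') (pre p x) -> forall j, j < n + p -> nodev j x' <= nodev j x.
Proof. by move=> H j hj; have := ble_ffun H (Ordinal hj); rewrite !ffunE. Qed.

Lemma pre_inp p x x' : ble (pre p x') (pre p x) -> ble x' x.
Proof.
move=> H; apply/forallP => i.
have := pre_ble H (leq_trans (ltn_ord i) (leq_addr p n)); rewrite !nodevL'.
by case: (x' i); case: (x i).
Qed.

Lemma even_form p : 2 <= p -> ~~ odd p -> p = ((p - 2)./2).*2 + 2.
Proof.
move=> h2 ho; have := odd_double_half (p - 2).
have -> : odd (p - 2) = odd p by rewrite -{2}(subnK h2) oddD addbF.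
rewrite (negbTE ho) /= add0n; lia.
Qed.

Lemma odd_form p : 3 <= p -> odd p -> p = ((p - 3)./2).*2 + 3.
Proof.
move=> h3 ho; have := odd_double_half (p - 3).
have -> : odd (p - 3) = ~~ odd p by rewrite -{2}(subnK h3) oddD /= addbT negbK.
rewrite ho /= add0n; lia.
Qed.

Lemma monext_mono p : monotone (monext p).
Proof.
move=> v v' hv; rewrite !ffunE; apply: le_bool => /existsP[y /andP[h1 h2]].
by apply/existsP; exists y; rewrite (ble_trans h1 hv) h2.
Qed.

Lemma bitsneg j x x' : ~~ bitf j x' <= ~~ bitf j x -> bitf j x <= bitf j x'.
Proof. by case: (bitf j x); case: (bitf j x'). Qed.

Lemma MC p x x' : p < N -> ~~ isneg p -> ble (pre p x') (pre p x) -> tgtf p x' -> tgtf p x.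
Proof.
move=> hp hneg H.
have Hx := pre_inp H.
have Hm := Dv_mono Hd Hx.
case: (ltnP p K2) => hK.
  case: (ltnP p 2) => h2.
    have : (p = 0) \/ (p = 1) by lia.
    by case => ->.
  have ho : ~~ odd p.
    apply: contra hneg => ho; rewrite /isneg ho hK andbT /=.
    by case: (eqVneq p 2) ho => [->//|]; lia.
  have Ep := even_form h2 ho.
  set r := (p - 2)./2 in Ep.
  have hr : r < k by move: hK; rewrite Ep /K2 -!muln2; lia.
  rewrite Ep !tgtf_b //.
  move=> hb'; suff H' : leq (bitf (k.-1 - r) x') (bitf (k.-1 - r) x).
    by move: H' hb'; case: (bitf _ x'); case: (bitf _ x).
  rewrite /bitf; apply: (@bit_step k); [lia | exact: Hm | exact: dlt | exact: dlt |].
  move=> j /andP[h1 h2j]; apply: bitsneg.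
  set r' := k.-1 - j.
  have hr' : r' < r by rewrite /r'; lia.
  have hrk : r' < k by lia.
  have := pre_ble H (j := n + (r'.*2 + 3)); rewrite !nodevR !tgtf_c //.
  have -> : k.-1 - r' = j by rewrite /r'; lia.
  by apply; move: Ep; rewrite -!muln2; lia.
set q := p - K2.
have Ep : p = K2 + q by rewrite /q subnKC.
have hq : q < size F by move: hp; rewrite /N; lia.
rewrite Ep !tgtf_f.
set f := nth [ffun _ => false] F q.
have hf : f \in F by apply: mem_nth.
have Hle : Dv F d x <= Dv F d x'.
  apply: (@bitle k); [exact: dlt | exact: dlt |].
  move=> j hj; apply: bitsneg.
  set r' := k.-1 - j.
  have hrk : r' < k by rewrite /r'; lia.
  have := pre_ble H (j := n + (r'.*2 + 3)); rewrite !nodevR !tgtf_c //.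
  have -> : k.-1 - r' = j by rewrite /r'; lia.
  by apply; rewrite Ep /K2 -!muln2; lia.
move=> fx'; apply/negPn/negP => fx.
by have := Dv_jump Hd hf Hx fx' fx; lia.
Qed.

Lemma gate_ok p x vals : p < N -> size vals = n + p ->
  (forall j, j < n + p -> nth false vals j = nodev j x) ->
  eval_gate vals (mkgate p) = tgtf p x.
Proof.
move=> hp hs hv; rewrite /mkgate; case: ifP => hneg.
  case/andP: hneg => /andP[ho h3] hK.
  have Ep := odd_form h3 ho; set r := (p - 3)./2 in Ep.
  have hr : r < k by move: hK; rewrite Ep /K2 -!muln2; lia.
  have Hn : nth false vals n = false.
    by rewrite hv; [have := nodevR 0 x; rewrite addn0 => -> | lia].
  have Hn1 : nth false vals n.+1 = true.
    by rewrite hv; [have := nodevR 1 x; rewrite addn1 => -> | lia].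
  have Hb : nth false vals (n + p).-1 = bitf (k.-1 - r) x.
    rewrite hv; last by lia.
    have -> : (n + p).-1 = n + (r.*2 + 2) by rewrite Ep; lia.
    by rewrite nodevR tgtf_b.
  have Hin : [ffun j => nth false vals (g_in (NEGg p) j)] = if bitf (k.-1 - r) x then b else a.
    apply/ffunP => j; rewrite !ffunE.
    have := ble_ffun hab j.
    case E: (a j == b j).
      by move=> _; case: (bitf _ x); rewrite -?(eqP E); case: (a j); rewrite ?Hn ?Hn1.
    by rewrite Hb; case: (bitf _ x); case: (a j) E; case: (b j).
  rewrite /eval_gate Hin Ep tgtf_c //.
  by case: (bitf _ x); rewrite ?ha ?(negbTE hb).
have Hin : [ffun j => nth false vals (g_in (MONg p) j)] = pre p x.
  apply/ffunP => j; rewrite !ffunE /= ?ffunE; apply: hv; exact: ltn_ord.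
rewrite /eval_gate Hin ffunE; apply/idP/idP.
  by case/existsP => x' /andP[h1 h2]; apply: (MC hp (negbT hneg) h1 h2).
by move=> h; apply/existsP; exists x; rewrite ble_refl h.
Qed.

Lemma eval_ok (x : bvec n) p : p <= N ->
  size (evalC (take p Cc) [seq x i | i <- enum 'I_n]) = n + p /\
  forall j, j < n + p -> nth false (evalC (take p Cc) [seq x i | i <- enum 'I_n]) j = nodev j x.
Proof.
elim: p => [|p IH] hp.
  rewrite take0 /= size_inpv addn0; split => // j hj.
  by rewrite /nodev hj.
have hp' : p < size Cc by rewrite size_mkseq.
have [hs hv] := IH (ltnW hp).
rewrite (take_nth dgate hp') evalC_rcons size_rcons hs addnS; split => // j hj.
rewrite nth_rcons hs; case: ltngtP => hj'.
- exact: hv.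
- lia.
- have hpN : p < N by rewrite size_mkseq in hp'.
  by rewrite hj' nodevR /Cc nth_mkseq //; apply: gate_ok.
Qed.

Lemma upper (om : seq bfun) : Tagged boolfun wf \in om ->
  (forall w, w \in om -> ~ monotone (projT2 w)) ->
  exists C, circuit_over n om C /\ realizes C F /\ weight om C <= k.
Proof.
move=> Hw Hnm; exists Cc; split; [split|split].
- apply: wf_nth => p hp; rewrite size_mkseq in hp; rewrite nth_mkseq //.
  rewrite /mkgate; case: ifP => hneg; apply/forallP => i /=; rewrite ffunE //.
  case/andP: hneg => /andP[_ h3] _.
  by case: ifP => _; [case: ifP => _|]; lia.
- move=> j hj; rewrite size_mkseq in hj; rewrite nth_mkseq // /mkgate.
  by case: ifP => _; [right | left; apply: monext_mono].
- move=> f hf; exists (n + (K2 + index f F)).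
    by rewrite /Cc size_mkseq /N !ltn_add2l index_mem.
  move=> x; have [_ H] := eval_ok x (leqnn N).
  rewrite take_oversize ?size_mkseq // in H.
  rewrite -[eval Cc x]/(evalC Cc _) H; last by rewrite /N !ltn_add2l index_mem.
  by rewrite nodevR tgtf_f nth_index.
- rewrite /weight /Cc /mkseq count_map.
  apply: leq_trans (count_isneg k N); apply: sub_count => p.
  rewrite /preim /mkgate /=; case: ifP => // _ hin.
  by exfalso; apply: (Hnm _ hin); apply: monext_mono.
Qed.
End Circ.

Unset Implicit Arguments.

Theorem theorem1 (om : seq bfun) (Hp : 0 < size om)
    (Hnm : forall w, w \in om -> ~ monotone (projT2 w)) :
  exists c : nat, forall (n : nat) (F : seq (boolfun n)) (d : nat),
    is_decrease F d ->
    (exists C : circuit, circuit_over n om C /\ realizes C F /\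
        weight om C <= ceil_log2 d.+1) /\
    (forall C : circuit, circuit_over n om C -> realizes C F ->
        ceil_log2 d.+1 <= weight om C + c).
Proof.
exists (Kom om) => n F d Hd; split; last first.
  by move=> C HC HR; apply: lower_bound Hd HC HR.
have Hw0 := mem_nth (existT _ 0 [ffun _ => false] : bfun) Hp.
move: Hw0; case: (nth _ om 0) => kw wf Hw.
have Hm := Hnm _ Hw; rewrite /= in Hm.
case E: [exists a, exists b, ble a b && wf a && ~~ wf b].
  case/existsP: E => a /existsP[b /andP[/andP[hab ha] hb]].
  exact: (upper Hd hab ha hb Hw Hnm).
exfalso; apply: Hm => a b hab.
case wa: (wf a) => //; case wb: (wf b) => //.
move/negbT: E; rewrite negb_exists => /forallP/(_ a); rewrite negb_exists => /forallP/(_ b).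
by rewrite hab wa wb.
Qed.
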